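(* Let $V$ be a module over a commutative ring $k$, let $[\cdot,\cdot]:V\times V\to V$ be a bilinear map such that $(V,[\cdot,\cdot])$ is a Lie algebra (i.e. $[x,x]=0$ and $\circlearrowleft_{x,y,z}[x,[y,z]]=0$ for all $x,y,z\in V$), and let $\alpha:V\to V$ be a linear map. Then: (1) if $(V,[\cdot,\cdot],\alpha)$ is a Hom-Lie algebra of type $I_2$, it is also a Hom-Lie algebra of type $I_1$; (2) if $(V,[\cdot,\cdot],\alpha)$ is a Hom-Lie algebra of type $II_2$, it is also a Hom-Lie algebra of type $II_1$.
   Context: For $x,y,z\in V$, $\circlearrowleft_{x,y,z} F(x,y,z)$ denotes $F(x,y,z)+F(y,z,x)+F(z,x,y)$. A triple $(V,[\cdot,\cdot],\alpha)$ with $V$ a $k$-module, $[\cdot,\cdot]$ bilinear with $[x,x]=0$ for all $x$, and $\alpha$ linear, is a Hom-Lie algebra of a given type if the corresponding identity holds for all $x,y,z\in V$: type $I_1$: $\circlearrowleft_{x,y,z}[\alpha(x),[y,z]]=0$; type $I_2$: $\circlearrowleft_{x,y,z}[x,[\alpha(y),z]]=0$; type $I_3$: $\circlearrowleft_{x,y,z}[x,[y,\alpha(z)]]=0$; type $II$: $\circlearrowleft_{x,y,z}[x,\alpha([y,z])]=0$; type $II_1$: $\circlearrowleft_{x,y,z}[x,[\alpha(y),\alpha(z)]]=0$; type $II_2$: $\circlearrowleft_{x,y,z}[\alpha(x),[y,\alpha(z)]]=0$; type $II_3$: $\circlearrowleft_{x,y,z}[\alpha(x),[\alpha(y),z]]=0$.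 *)

(* Defs.v *)
From HB Require Import structures.
From mathcomp Require Import all_boot all_order all_algebra.
From mathcomp Require Import sesquilinear.
Set Implicit Arguments. Unset Strict Implicit. Unset Printing Implicit Defensive.
Import GRing.Theory.
Local Open Scope ring_scope.

Definition cyc {V : zmodType} (F : V -> V -> V -> V) (x y z : V) : V :=
  F x y z + F y z x + F z x y.

Section HomLie.
Variables (R : comNzRingType) (V : lmodType R).
Variables (br : V -> V -> V) (al : V -> V).

Definition alternating := forall x : V, br x x = 0.
Definition jacobi := forall x y z : V, cyc (fun a b c => br a (br b c)) x y z = 0.
Definition homLie_I1 := forall x y z : V, cyc (fun a b c => br (al a) (br b c)) x y z = 0.
Definition homLie_I2 := forall x y z : V, cyc (fun a b c => br a (br (al b) c)) x y z = 0.
Definition homLie_II1 := forall x y z : V, cyc (fun a b c => br a (br (al b) (al c))) x y z = 0.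
Definition homLie_II2 := forall x y z : V, cyc (fun a b c => br (al a) (br b (al c))) x y z = 0.
End HomLie.

(* Main.v *)
Require Import Defs.
From HB Require Import structures.
From mathcomp Require Import all_boot all_order all_algebra.
From mathcomp Require Import sesquilinear.
Local Open Scope ring_scope.
Import GRing.Theory.

Lemma z3 (V : zmodType) (a b c : V) : a - b + c = 0 -> a = b - c.
Proof. by rewrite addrAC => /eqP; rewrite subr_eq0 => /eqP <-; rewrite addrK. Qed.

Lemma z9 (V : zmodType) (b1 b2 b3 c1 c2 c3 : V) :
  b1 + b3 + b2 = 0 -> c2 + c3 + c1 = 0 -> (b1 - c1) + (b2 - c2) + (b3 - c3) = 0.
Proof.
move=> Hb Hc.
have -> : (b1 - c1) + (b2 - c2) + (b3 - c3) = (b1 + b3 + b2) - (c2 + c3 + c1).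
  rewrite !opprD.
  rewrite (addrACA b1 (-c1) b2 (-c2)) (addrACA (b1 + b2) (-c1 - c2) b3 (-c3)).
  congr (_ + _). by rewrite addrAC.
  by rewrite [RHS]addrC addrA.
by rewrite Hb Hc subr0.
Qed.

Theorem proposition1p1 (R : comNzRingType) (V : lmodType R)
  (br : {bilinear V -> V -> V}) (al : {linear V -> V}) :
  alternating br -> jacobi br ->
  (homLie_I2 br al -> homLie_I1 br al) /\
  (homLie_II2 br al -> homLie_II1 br al).
Proof.
move=> Ha Hj.
have anti : forall x y, br x y = - br y x.
  move=> x y; apply/eqP; rewrite -subr_eq0 opprK.
  have := Ha (x + y); rewrite linearDl !linearDr /= !Ha add0r addr0 => ->.
  done.
split.
- move=> H x y z; rewrite /cyc.
  have e1 := Hj (al x) y z; have e2 := Hj (al y) z x; have e3 := Hj (al z) x y.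
  rewrite /cyc in e1 e2 e3.
  rewrite [br z (al x)]anti [br x (al y)]anti [br y (al z)]anti !linearNr in e1 e2 e3.
  rewrite (@z3 _ _ _ _ e1) (@z3 _ _ _ _ e2) (@z3 _ _ _ _ e3).
  apply: z9; [exact: H y x z | exact: H x y z].
- move=> H x y z; rewrite /cyc.
  have e1 := Hj x (al y) (al z); have e2 := Hj y (al z) (al x); have e3 := Hj z (al x) (al y).
  rewrite /cyc in e1 e2 e3.
  rewrite [br (al z) x]anti [br (al x) y]anti [br (al y) z]anti !linearNr in e1 e2 e3.
  rewrite (@z3 _ _ _ _ e1) (@z3 _ _ _ _ e2) (@z3 _ _ _ _ e3).
  apply: z9; [exact: H y x z | exact: H x y z].
Qed.
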